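(* Fix $C<e^{-1}$ and $\theta>0$. There are positive constants $M$ and $L_2$ such that \[ \mathbb{P}\Big(\bigcap_{1\le j\le n}\{\#\mathcal{E}_j\le M\log n\}\Big)\ \ge\ 1-\frac{1}{n^{\theta}} \] for all $n\ge L_2$.
   Context: Let $C>0$ be a constant and $(\alpha_n)_{n\ge1}$ a sequence of nonnegative reals with $\alpha_n\to0$. For each $n$, consider the complete graph $K_n$ on vertex set $\{1,\dots,n\}$; each edge $e$ of $K_n$ is independently open with probability $p_n(e)$ and closed otherwise, where $\frac{C-\alpha_n}{n}\le p_n(e)\le\frac{C+\alpha_n}{n}$ for every edge $e$. Let $G$ be the resulting random graph of open edges, with probability measure $\mathbb{P}$. For a vertex $i$, $\mathcal{E}_i$ denotes the open component of $G$ containing $i$ (the set of vertices joined to $i$ by a path of open edges, together with $i$ itself), and $\#\mathcal{E}_i$ its number of vertices. $\log$ is the natural logarithm. *)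

(* Defs.v *)
From HB Require Import structures.
From mathcomp Require Import all_boot all_order all_algebra.
From mathcomp Require Import all_classical all_reals all_analysis.
Set Implicit Arguments. Unset Strict Implicit. Unset Printing Implicit Defensive.
Import Order.TTheory GRing.Theory Num.Theory.
Local Open Scope ring_scope.

(* Edges of the complete graph K_n on vertex set 'I_n (= {1..n} shifted):
   unordered pairs of distinct vertices, i.e. 2-element subsets. *)
Definition Kedges (n : nat) : {set {set 'I_n}} := [set e : {set 'I_n} | #|e| == 2%N].

Definition is_config (n : nat) (G : {set {set 'I_n}}) : bool := G \subset Kedges n.

Definition config_prob (R : realType) (n : nat) (p : {set 'I_n} -> R)
    (G : {set {set 'I_n}}) : R :=
  \prod_(e in Kedges n) (if e \in G then p e else 1 - p e).

Definition Prob (R : realType) (n : nat) (p : {set 'I_n} -> R)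
    (A : {set {set 'I_n}} -> bool) : R :=
  \sum_(G : {set {set 'I_n}} | is_config G && A G) config_prob p G.

Definition open_adj (n : nat) (G : {set {set 'I_n}}) : rel 'I_n :=
  fun i j => [set i; j] \in G.

Definition open_cluster (n : nat) (G : {set {set 'I_n}}) (i : 'I_n) : {set 'I_n} :=
  [set j | connect (open_adj G) i j].

(* Main.v *)
Require Import Defs.
From HB Require Import structures.
From mathcomp Require Import all_boot all_order all_algebra.
From mathcomp Require Import all_classical all_reals all_analysis.
From mathcomp Require Import ring lra.
Import Order.TTheory GRing.Theory Num.Theory numFieldNormedType.Exports.
Local Open Scope ring_scope.
Set Implicit Arguments. Unset Strict Implicit.

Section ProbLemmas.
Variables (R : realType) (n : nat) (p : {set 'I_n} -> R).

Lemma Prob_marg (F : {set {set 'I_n}}) : F \subset Kedges n ->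
  Prob p (fun G => F \subset G) = \prod_(e in F) p e.
Proof.
move=> FK.
pose H (e : {set 'I_n}) (b : bool) : R :=
  if e \in Kedges n then (if e \in F then (if b then p e else 0)
                          else (if b then p e else 1 - p e))
  else (if b then 0 else 1).
have h1 : \prod_(e in F) p e = \prod_e (H e true + H e false).
  rewrite [RHS](bigID (fun e => e \in F)) /= [X in _ * X]big1 ?mulr1.
    apply: eq_bigr => e eF; rewrite /H eF (fintype.subsetP FK _ eF) addr0 //.
  move=> e eF; rewrite /H (negbTE eF); case: (e \in Kedges n).
    by rewrite addrC subrK.
  by rewrite add0r.
rewrite h1 bigA_distr /Prob [LHS]big_mkcond /=; symmetry.
apply: eq_bigr => G _.
case: ifP => [/andP[GK FG]|].
  rewrite /config_prob (bigID (fun e => e \in Kedges n)) /= [X in _ * X]big1 ?mulr1.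
    apply: eq_bigr => e eK; rewrite /H eK; case eG: (e \in G); case eF: (e \in F) => //.
    by rewrite (fintype.subsetP FG _ eF) in eG.
  move=> e eK; rewrite /H (negbTE eK); case: ifP => // eG.
  by move: eK; rewrite (fintype.subsetP GK _ eG).
move/negbT; rewrite negb_and => /orP[/fintype.subsetPn[e eG eK]|/fintype.subsetPn[e eF eG]].
  rewrite (bigD1 e) //= /H (negbTE eK) eG mul0r //.
rewrite (bigD1 e) //= /H (fintype.subsetP FK _ eF) eF (negbTE eG) mul0r //.
Qed.

Lemma Prob_total : Prob p (fun _ => true) = 1.
Proof.
have := @Prob_marg finset.set0 (finset.sub0set _); rewrite big_set0 => <-.
by apply: eq_bigl => G; rewrite finset.sub0set.
Qed.

Lemma Prob_split (A : pred {set {set 'I_n}}) :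
  Prob p A = 1 - Prob p (fun G => ~~ A G).
Proof.
rewrite -Prob_total.
have -> : Prob p (fun _ => true) = Prob p A + Prob p (fun G => ~~ A G).
  by rewrite /Prob (bigID A) /=; congr (_ + _); apply: eq_bigl => G; rewrite andbT.
by rewrite addrK.
Qed.

Hypothesis p01 : forall e, e \in Kedges n -> 0 <= p e <= 1.

Lemma config_prob_ge0 G : 0 <= config_prob p G.
Proof.
apply: prodr_ge0 => e eK; have /andP[p0 p1] := p01 eK.
by case: ifP => _ //; rewrite subr_ge0.
Qed.

Lemma Prob_union (I : finType) (P : pred I) (B : I -> pred {set {set 'I_n}})
   (A : pred {set {set 'I_n}}) :
  (forall G, is_config G -> A G -> exists i, P i && B i G) ->
  Prob p A <= \sum_(i | P i) Prob p (B i).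
Proof.
move=> hA.
rewrite /Prob (exchange_big_dep (fun G => is_config G)) /=; last first.
  by move=> i G _ /andP[].
apply: (@le_trans _ _ (\sum_(G | is_config G && A G)
          \sum_(i | P i && (is_config G && B i G)) config_prob p G)).
  apply: ler_sum => G /andP[cG aG]; have [i /andP[Pi Bi]] := hA G cG aG.
  rewrite (bigD1 i) /=; last by rewrite Pi cG Bi.
  by rewrite lerDl sumr_ge0 // => j _; apply: config_prob_ge0.
rewrite [X in _ <= X](bigID A) /= lerDl sumr_ge0 // => G _.
by rewrite sumr_ge0 // => j _; apply: config_prob_ge0.
Qed.

End ProbLemmas.

Lemma path_exit (T : finType) (e : rel T) (S : {set T}) x q :
  x \in S -> path e x q -> last x q \notin S ->
  exists u w, [/\ u \in S, w \notin S & e u w].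
Proof.
elim: q x => [|y q IH] x xS /=; first by rewrite xS.
case/andP => exy pq lq; case yS: (y \in S); first exact: IH yS pq lq.
by exists x, y; rewrite yS.
Qed.

Section Comb.
Variable n : nat.
Implicit Types (j : 'I_n) (S : {set 'I_n}) (f : {ffun 'I_n -> 'I_n})
  (G : {set {set 'I_n}}).

Definition edgesF j S f : {set {set 'I_n}} := [set [set v; f v] | v in S :\ j].

Definition valid (m : nat) j S f : bool :=
  [&& j \in S, #|S| == m.+1, f \in pffun_on j (S :\ j) S &
     [forall v in S :\ j, (f v != v) && ((f v == j) || (f (f v) != v))]].

Lemma edgesF_card m j S f : valid m j S f -> #|edgesF j S f| = m.
Proof.
case/and4P => jS /eqP cS _ /forall_inP H.
rewrite card_in_imset.
  by have := cardsD1 j S; rewrite jS cS add1n => -[].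
move=> v u vS uS /= e.
apply/eqP/negPn/negP => nvu.
have vin : v \in [set u; f u] by rewrite -e !inE eqxx.
have uin : u \in [set v; f v] by rewrite e !inE eqxx.
move: vin uin; rewrite !inE => /orP[/eqP vu|/eqP vf]; first by rewrite vu eqxx in nvu.
move=> /orP[/eqP uv|/eqP uf]; first by rewrite uv eqxx in nvu.
have /andP[_ ] := H v vS.
rewrite -uf -vf eqxx orbF.
by move: uS; rewrite in_setD1 => /andP[/negbTE ->].
Qed.

Lemma edgesF_K m j S f : valid m j S f -> edgesF j S f \subset Kedges n.
Proof.
case/and4P => _ _ _ /forall_inP H; apply/fintype.subsetP => e /imsetP[v vS ->].
rewrite inE cards2; have /andP[h _] := H v vS.
by case: (eqVneq v (f v)) h => // <-; rewrite eqxx.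
Qed.

Lemma exists_tree G j m : (m.+1 <= #|open_cluster G j|)%N ->
  exists S, exists f, [&& valid m j S f, edgesF j S f \subset G &
                         S \subset open_cluster G j].
Proof.
elim: m => [|m IH] hm.
  exists [set j], [ffun => j].
  apply/and3P; split.
  - apply/and4P; split.
    + by rewrite inE.
    + by rewrite cards1.
    + apply/pffun_onP; split.
        by apply/fintype.subsetP => x; rewrite inE ffunE eqxx.
      by move=> y /mapP[x _ ->]; rewrite ffunE inE.
    + by apply/forall_inP => v; rewrite !inE => /andP[/negbTE ->].
  - by apply/fintype.subsetP => e /imsetP[v]; rewrite !inE => /andP[/negbTE->].
  - by rewrite finset.sub1set inE connect0.
have [S [f /and3P[vS eG SC]]] := IH (ltnW hm).
case/and4P: (vS) => jS /eqP cS /pffun_onP[fsup fval] /forall_inP fcyc.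
have : ~~ (open_cluster G j \subset S).
  by apply/negP => /subset_leq_card; rewrite cS leqNgt hm.
case/fintype.subsetPn => w0 w0C w0S.
have [u [w [uS wS uw]]] : exists u w, [/\ u \in S, w \notin S & open_adj G u w].
  move: w0C; rewrite inE => /connectP[q qpath qlast].
  by apply: (@path_exit _ _ S j q jS qpath); rewrite -qlast.
have wj : w != j by apply: contraNneq wS => ->.
have fS x : x \in S :\ j -> f x \in S by move=> xD; apply: fval; by apply: map_f; rewrite mem_enum.
have fj x : f x != j -> x \in S :\ j.
  by move=> fx; apply: (fintype.subsetP fsup); rewrite inE.
pose f' := [ffun x => if x == w then u else f x].
have f'w : f' w = u by rewrite ffunE eqxx.
have f'x x : x != w -> f' x = f x by move=> xw; rewrite ffunE (negbTE xw).
have Sw x : x \in S -> x != w by move=> xS; apply: contraNneq wS => <-.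
exists (w |: S), f'.
apply/and3P; split.
- apply/and4P; split.
  + by rewrite in_setU1 jS orbT.
  + by rewrite cardsU1 wS cS.
  + apply/pffun_onP; split.
      apply/fintype.subsetP => x; rewrite inE => hx.
      rewrite in_setD1 in_setU1; case: (eqVneq x w) => [->|xw] /=; first by rewrite wj.
      by move: hx; rewrite f'x // => /fj; rewrite in_setD1.
    move=> y /mapP[x]; rewrite mem_enum; rewrite in_setD1 in_setU1 => /andP[xj].
    case: (eqVneq x w) => [->|xw] /= xS ->; first by rewrite f'w in_setU1 uS orbT.
    by rewrite f'x // in_setU1 fS ?orbT // in_setD1 xj.
  + apply/forall_inP => v; rewrite in_setD1 in_setU1 => /andP[vj].
    case: (eqVneq v w) => [->|vw] /= vS0.
      have uw' : u != w by apply: Sw.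
      rewrite f'w uw' /=; case: (eqVneq u j) => //= uj.
      by rewrite f'x // Sw // fS // in_setD1 uj.
    have vD : v \in S :\ j by rewrite in_setD1 vj vS0.
    rewrite f'x //; have /andP[-> h] := fcyc v vD; rewrite /=.
    case: (eqVneq (f v) j) => //= fvj.
    by rewrite f'x ?Sw ?fS //; move: h; rewrite (negbTE fvj).
- apply/fintype.subsetP => e /imsetP[v]; rewrite in_setD1 in_setU1 => /andP[vj].
  case: (eqVneq v w) => [->|vw] /= vS0 ->.
    by rewrite f'w; move: uw; rewrite /open_adj finset.setUC.
  rewrite f'x //; apply: (fintype.subsetP eG); apply: imset_f.
  by rewrite in_setD1 vj vS0.
- rewrite finset.subUset SC andbT finset.sub1set inE.
  apply: connect_trans (connect1 uw).
  by move: (fintype.subsetP SC _ uS); rewrite inE.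
Qed.

End Comb.

Lemma card_sets_with n (j : 'I_n) m :
  (#|[set S : {set 'I_n} | (j \in S) && (#|S| == m.+1)]| <= 'C(n.-1, m))%N.
Proof.
rewrite -(card_in_imset (f := fun S => S :\ j)); last first.
  move=> S S'; rewrite !inE => /andP[jS _] /andP[jS' _] /= e.
  by rewrite -(finset.setD1K jS) -(finset.setD1K jS') e.
have -> : n.-1 = #|[set~ j]| by rewrite cardsC1 card_ord.
rewrite -cards_draws; apply: subset_leq_card.
apply/fintype.subsetP => T /imsetP[S hS ->]; move: hS; rewrite !inE => /andP[jS /eqP cS].
apply/andP; split.
  by apply/fintype.subsetP => x; rewrite in_setD1 in_setC1 => /andP[].
by have := cardsD1 j S; rewrite jS cS add1n => -[<-].
Qed.

Lemma count_bound (R : realType) n m (c : R) : 0 <= c ->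
  \sum_(x : 'I_n * {set 'I_n} * {ffun 'I_n -> 'I_n} | valid m x.1.1 x.1.2 x.2) c
   <= (n * 'C(n.-1, m) * m.+1 ^ m)%:R * c.
Proof.
move=> c0.
rewrite big_mkcond /=.
rewrite -(pair_big xpredT xpredT (fun a f => if valid m a.1 a.2 f then c else 0)) /=.
rewrite -(pair_big xpredT xpredT (fun j S => \sum_f if valid m j S f then c else 0)) /=.
apply: (@le_trans _ _ (\sum_(j : 'I_n) \sum_(S : {set 'I_n})
   (if (j \in S) && (#|S| == m.+1) then (m.+1 ^ m)%:R * c else 0))).
  apply: ler_sum => j _; apply: ler_sum => S _.
  case: ifP => [/andP[jS /eqP cS]|h].
    apply: (@le_trans _ _ (\sum_(f in pffun_on j (S :\ j) S) c)).
      rewrite [X in _ <= X]big_mkcond; apply: ler_sum => f _.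
      case: ifP => [/and4P[_ _ -> _]|_] //; by case: ifP.
    rewrite sumr_const card_pffun_on cS mulr_natl.
    by have := cardsD1 j S; rewrite jS cS add1n => -[<-].
  rewrite [X in X <= _]bigop.big1 // => f _; case: ifP => //; case/and4P => jS cS _ _.
  by rewrite jS cS in h.
apply: (@le_trans _ _ (\sum_(j < n) ((m.+1 ^ m)%:R * c) *+ 'C(n.-1, m))).
  apply: ler_sum => j _; rewrite -big_mkcond /=.
  rewrite (eq_bigl (fun S => S \in [set S : {set 'I_n} | (j \in S) && (#|S| == m.+1)])); last first.
    by move=> S; rewrite !inE.
  rewrite sumr_const; apply: ler_wpMn2l; last exact: card_sets_with.
  by rewrite mulr_ge0.
rewrite sumr_const card_ord le_eqVlt; apply/orP; left; apply/eqP.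
rewrite !natrM.
set a := n%:R; set b := 'C(n.-1, m)%:R; set d := (m.+1 ^ m)%:R.
rewrite -mulrnA -mulr_natl natrM -/a -/b.
clearbody a b d. ring.
Qed.

Section Analytic.
Variable R : realType.

Lemma one_le_e : 1 <= expR 1 :> R.
Proof. by rewrite ltW // expR_gt1. Qed.

Lemma step_bound k : (k.+1%:R ^+ k) <= expR 1 * (k%:R ^+ k) :> R.
Proof.
case: k => [|k]; first by rewrite !expr0 mulr1 one_le_e.
set K := k.+1.
have kp : 0 < K%:R :> R by rewrite ltr0n.
have -> : K.+1%:R = K%:R * (1 + K%:R^-1) :> R.
  by rewrite mulrDr mulr1 mulfV ?gt_eqF // -natr1.
rewrite exprMn mulrC; apply: ler_wpM2r; first by rewrite exprn_ge0 // ltW.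
have -> : expR 1 = expR (K%:R^-1) ^+ K :> R.
  by rewrite -expRM_natl mulfV // gt_eqF.
apply: lerXn2r.
- by rewrite nnegrE addr_ge0 // invr_ge0 ltW.
- by rewrite nnegrE expR_ge0.
- exact: expR_ge1Dx.
Qed.

Lemma fact_bound m : (m.+1%:R ^+ m) <= m`!%:R * expR 1 ^+ m :> R.
Proof.
elim: m => [|m IH]; first by rewrite !expr0 fact0 mulr1.
apply: (le_trans (step_bound m.+1)).
rewrite exprS factS natrM exprS.
have h0 : 0 <= m.+1%:R :> R by [].
have e0 : 0 <= expR 1 :> R by apply: expR_ge0.
have := ler_wpM2l h0 IH => h.
have := ler_wpM2l e0 h => h'.
apply: (le_trans h'); rewrite le_eqVlt; apply/orP; left; apply/eqP.
set a := m.+1%:R; set b := m`!%:R; set c := expR 1; clearbody a b c. ring.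
Qed.

Lemma ffact_le_exp n m : (n.-1 ^_ m <= n ^ m)%N.
Proof.
elim: m => // m IH; rewrite ffactnSr expnSr; apply: leq_mul => //.
exact: leq_trans (leq_subr _ _) (leq_pred _).
Qed.

Lemma total_bound n m (cc : R) : (0 < n)%N -> 0 <= cc ->
  (n * 'C(n.-1, m) * m.+1 ^ m)%:R * (cc / n%:R) ^+ m <= n%:R * (expR 1 * cc) ^+ m.
Proof.
move=> n0 cc0.
have np : 0 < n%:R :> R by rewrite ltr0n.
have hC : 'C(n.-1, m)%:R * m`!%:R <= n%:R ^+ m :> R.
  by rewrite -natrM -natrX ler_nat bin_ffact ffact_le_exp.
have hF := fact_bound m.
rewrite !natrM natrX expr_div_n exprMn.
set C := 'C(n.-1, m)%:R in hC *; set X := m.+1%:R ^+ m in hF *.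
set F := m`!%:R in hC hF *; set E := expR 1 ^+ m in hF *.
set P := cc ^+ m; set N := n%:R ^+ m in hC *; set a := n%:R in np *.
have C0 : 0 <= C by rewrite /C.
have E0 : 0 <= E by rewrite /E exprn_ge0 // expR_ge0.
have P0 : 0 <= P by rewrite /P exprn_ge0.
have N0 : 0 < N by rewrite /N exprn_gt0.
have h1 : C * X <= N * E.
  apply: (le_trans (ler_wpM2l C0 hF)); rewrite mulrA; exact: ler_wpM2r.
have h2 : C * X * P / N <= E * P.
  rewrite ler_pdivrMr //; apply: (le_trans (ler_wpM2r P0 h1)).
  by rewrite le_eqVlt; apply/orP; left; apply/eqP; clearbody C X F E P N a; ring.
have h3 := ler_wpM2l (ltW np) h2.
apply: (le_trans _ h3); rewrite le_eqVlt; apply/orP; left; apply/eqP.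
clearbody C X F E P N a; ring.
Qed.

End Analytic.

Unset Implicit Arguments.
Set Strict Implicit.
Local Open Scope classical_set_scope.
Local Open Scope ring_scope.

Theorem theorem2 (R : realType) (C theta : R) (alpha : nat -> R)
  (p : forall n : nat, {set 'I_n} -> R) :
  0 < C -> C < expR (-1) -> 0 < theta ->
  (forall n, 0 <= alpha n) -> alpha n @[n --> \oo] --> 0%R ->
  (forall n (e : {set 'I_n}), e \in Kedges n ->
      [/\ 0 <= p n e, p n e <= 1,
          (C - alpha n) / n%:R <= p n e & p n e <= (C + alpha n) / n%:R]) ->
  exists M : R, exists L2 : R, [/\ 0 < M, 0 < L2 &
    forall n : nat, L2 <= n%:R ->
      Prob (p n) (fun G => [forall j : 'I_n,
                              (#|open_cluster G j|%:R <= M * ln (n%:R : R))])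
      >= 1 - (n%:R `^ theta)^-1].
Proof.
move=> C0 Ce th0 al0 alcv hp.
pose c' := (C + expR (-1)) / 2.
have Cc : C < c' by rewrite /c'; lra.
have ce : c' < expR (-1) by rewrite /c'; lra.
have c'0 : 0 <= c' by rewrite /c'; apply: ltW; lra.
pose r := expR 1 * c'.
have r0 : 0 < r by rewrite /r mulr_gt0 // ?expR_gt0 //; lra.
have r1 : r < 1.
  have : expR 1 * c' < expR 1 * expR (-1) by rewrite ltr_pM2l // expR_gt0.
  by rewrite -expRD subrr expR0.
have lr : ln r < 0 by apply: ln_lt0; rewrite r0 r1.
pose M := (theta + 2) / (- ln r).
have M0 : 0 < M by rewrite /M divr_gt0 //; lra.
have hM : M * ln r = - (theta + 2).
  rewrite /M invrN mulrN mulNr -mulrA mulVf ?mulr1 //; exact: ltr0_neq0.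
have [N0 hN0] : exists N0 : nat, forall n, (N0 <= n)%N -> alpha n <= c' - C.
  have /cvgrPdist_lt/(_ (c' - C) _) := alcv.
  case; first by rewrite subr_gt0.
  move=> N1 _ hN1; exists N1 => n nN.
  have := hN1 n nN; rewrite sub0r normrN => h.
  exact: ltW (le_lt_trans (ler_norm _) h).
exists M, (Num.max N0%:R (Num.max 1 r^-1)); split => //.
  by apply: (lt_le_trans ltr01); rewrite !le_max lexx orbT.
move=> n hn.
move: hn; rewrite !ge_max => /andP[hN /andP[n1 nr]].
have nN0 : (N0 <= n)%N by rewrite -(ler_nat R).
have n0 : (0 < n)%N by rewrite -(ltr_nat R); apply: lt_le_trans ltr01 n1.
have np : 0 < n%:R :> R by rewrite ltr0n.
pose L := ln (n%:R : R).
have L0 : 0 <= L by apply: ln_ge0.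
pose x := M * L.
have x0 : 0 <= x by rewrite /x mulr_ge0 // ltW.
pose m := Num.truncn x.
have hpn : forall e, e \in Kedges n -> 0 <= p n e <= c' / n%:R.
  move=> e eK; have [h0 _ _ h3] := hp n e eK.
  rewrite h0 /=; apply: (le_trans h3); apply: ler_wpM2r; first by rewrite invr_ge0 ltW.
  have := hN0 n nN0; lra.
have p01 : forall e, e \in Kedges n -> 0 <= p n e <= 1.
  by move=> e eK; have [h0 h1 _ _] := hp n e eK; rewrite h0 h1.
rewrite Prob_split.
suff h : Prob (p n) (fun G => ~~ [forall j : 'I_n,
                              (#|open_cluster G j|%:R <= M * ln (n%:R : R))])
         <= (n%:R `^ theta)^-1 by rewrite lerD2l lerN2.
apply: le_trans (Prob_union p01 (P := fun i => valid m i.1.1 i.1.2 i.2)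
   (B := fun i G => edgesF i.1.1 i.1.2 i.2 \subset G) _) _.
  move=> G _ /forallPn [j hj]; rewrite -ltNge in hj.
  have : (m.+1 <= #|open_cluster G j|)%N by rewrite /m truncn_lt_nat.
  case/exists_tree => S [f /and3P[v e _]].
  by exists (j, S, f); rewrite /= v e.
apply: (@le_trans _ _ (\sum_(i | valid m i.1.1 i.1.2 i.2) (c' / n%:R) ^+ m)).
  apply: ler_sum => [[[j S] f]] /= v.
  rewrite Prob_marg ?(edgesF_K v) // -(edgesF_card v) -prodr_const.
  apply: ler_prod => e eF; apply: hpn.
  exact: (fintype.subsetP (edgesF_K v) _ eF).
apply: le_trans (count_bound n m _) _; first by rewrite exprn_ge0 // divr_ge0.
apply: le_trans (total_bound m n0 c'0) _.
have nE : n%:R = expR L by rewrite /L lnK // posrE.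
have rE : r = expR (ln r) by rewrite lnK // posrE.
rewrite -/r {1}nE {1}rE -expRM_natl -expRD /powR gt_eqF // -expRN ler_expR.
have hm : x - 1 <= m%:R.
  have := truncnS_gt x; rewrite -/m -natr1 => h; apply: ltW; lra.
have h1 : m%:R * ln r <= (x - 1) * ln r by apply: ler_wnM2r => //; apply: ltW.
have h2 : x * ln r = - (theta * L) - 2 * L.
  by rewrite /x mulrAC hM; ring.
have h3 : - ln r <= L.
  rewrite -lnV ?posrE //; apply: (@le_trans _ _ (ln (n%:R : R))) => //.
  by rewrite ler_ln ?posrE ?invr_gt0.
rewrite mulrBl mul1r in h1.
move: h1 h2 h3; rewrite -/L.
set a := m%:R * ln r; set b := x * ln r; set t := theta * L; set lr' := ln r.
clearbody a b t lr'.
move=> *; lra.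
Qed.
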